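(* Let $\mathcal{I},\mathcal{J}$ be finite index sets, let $U_i>0$ ($i\in\mathcal{I}$) be bandwidths and $d_j\ge1$ ($j\in\mathcal{J}$) integer memory sizes, and let $\alpha_{ij}\ge0$ with $\sum_{i,j}\alpha_{ij}=1$. Let $C=\{1,\dots,m\}$ and $\bar\lambda_c>0$ for $c\in C$, $\bar\lambda=\sum_{c}\bar\lambda_c$, and $\rho=\bar\lambda/\sum_{i,j}\alpha_{ij}U_i$. For each $n$, consider the instance with $n$ servers, of which a fraction $\alpha_{ij}$ have bandwidth $U_i$ and memory size $d_j$, and content popularities $\lambda_c=n\bar\lambda_c$, and apply to it the \texttt{greedy} allocation algorithm: initialize $\mathsf{flow}(s)=U_s$, $\mathsf{deg}(s)=d_s$, $\mathsf{flow}(c)=\lambda_c$, $a_{sc}=0$; while some $(s,c)$ has $\mathsf{flow}(s)\mathsf{deg}(s)\mathsf{flow}(c)>0$, choose $s^*\in\arg\max_{s:\mathsf{deg}(s)>0}\mathsf{flow}(s)$, $c^*\in\arg\max_c\mathsf{flow}(c)$, let $f=\min(\mathsf{flow}(s^* ),\mathsf{flow}(c^* ))$, decrease $\mathsf{flow}(s^* )$ and $\mathsf{flow}(c^* )$ by $f$, decrease $\mathsf{deg}(s^* )$ by 1, and set $a_{s^*c^*}=1$. For $K\subseteq C$ let $q^{(n)}_{ijK}$ be the fraction of servers with bandwidth $U_i$ and memory size $d_j$ whose cache contents $\{c:a_{sc}=1\}$ equal $K$, let $q_{ijK}=\lim_n q^{(n)}_{ijK}$, write $q_{ijc}$ for $q_{ij\{c\}}$,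 and let $\theta_c=\sum_{i\in\mathcal{I},j\in\mathcal{J}}\alpha_{ij}U_iq_{ijc}$. Then $q_{ijK}=0$ for all $K$ with $|K|\ge2$. Furthermore, if $\rho\le1$ then $\theta_c=\bar\lambda_c$ for all $c\in C$. If $\rho>1$, the popularities are ordered as $\bar\lambda_1>\bar\lambda_2>\dots>\bar\lambda_m>0$, and $c^*\in\{1,\dots,m\}$ is such that \[ \frac{\bar\lambda}{\rho}\in\Big(\sum_{c'=1}^{c^*-1}\bar\lambda_{c'}-(c^*-1)\bar\lambda_{c^*},\ \sum_{c'=1}^{c^*}\bar\lambda_{c'}-c^*\bar\lambda_{c^*+1}\Big] \] (with the convention $\bar\lambda_{m+1}=0$), then \[ \theta_c=\begin{cases}\bar\lambda_c-\frac{1}{c^*}\Big[\sum_{c'=1}^{c^*}\bar\lambda_{c'}-\frac{\bar\lambda}{\rho}\Big], & 1\le c\le c^*,\\ 0, & c^*+1\le c\le m.\end{cases} \]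
   Context: A server with bandwidth $U$ can serve $U$ requests simultaneously; a server with memory size $d$ can store at most $d$ contents. $\bar\lambda/\rho=\sum_{i,j}\alpha_{ij}U_i$ is the per-server total bandwidth. The number $n\alpha_{ij}$ of servers of each type is assumed integral. *)

(* Defs.v *)
From HB Require Import structures.
From mathcomp Require Import all_boot all_order all_algebra.
From mathcomp Require Import all_classical all_reals all_analysis.
Set Implicit Arguments. Unset Strict Implicit. Unset Printing Implicit Defensive.
Import Order.TTheory GRing.Theory Num.Theory.
Import numFieldNormedType.Exports.
Local Open Scope ring_scope.

(* State of the greedy allocation algorithm on an instance with N servers
   (indexed by 'I_N) and m contents (indexed by 'I_m; content c+1 of the
   paper is the ordinal c). *)
Record gstate (R : realType) (N m : nat) := GState {
  gflow_s : 'I_N -> R;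
  gdeg    : 'I_N -> nat;
  gflow_c : 'I_m -> R;
  galloc  : {set 'I_N * 'I_m}   (* the pairs (s,c) with a_{sc} = 1 *)
}.

Definition genabled (R : realType) (N m : nat) (st : gstate R N m) : Prop :=
  exists (s : 'I_N) (c : 'I_m),
    0 < gflow_s st s * (gdeg st s)%:R * gflow_c st c.

(* one iteration of the loop, for any admissible choice of the argmaxes *)
Definition gstep (R : realType) (N m : nat) (st st' : gstate R N m) : Prop :=
  exists (s0 : 'I_N) (c0 : 'I_m),
    [/\ (0 < gdeg st s0)%N,
        (forall s, (0 < gdeg st s)%N -> gflow_s st s <= gflow_s st s0),
        (forall c, gflow_c st c <= gflow_c st c0) &
        let f := Num.min (gflow_s st s0) (gflow_c st c0) in
        st' = GState (fun s => if s == s0 then gflow_s st s - f else gflow_s st s)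
                     (fun s => if s == s0 then (gdeg st s).-1 else gdeg st s)
                     (fun c => if c == c0 then gflow_c st c - f else gflow_c st c)
                     ((s0, c0) |: galloc st)].

Inductive greach (R : realType) (N m : nat) : gstate R N m -> gstate R N m -> Prop :=
| greach_refl st : greach st st
| greach_step st st' st'' :
    genabled st -> gstep st st' -> greach st' st'' -> greach st st''.

Definition greedy_output (R : realType) (N m : nat)
  (Us : 'I_N -> R) (ds : 'I_N -> nat) (lam : 'I_m -> R)
  (a : {set 'I_N * 'I_m}) : Prop :=
  exists fin : gstate R N m,
    [/\ greach (GState Us ds lam finset.set0) fin, ~ genabled fin & galloc fin = a].

Definition cache (N m : nat) (a : {set 'I_N * 'I_m}) (s : 'I_N) : {set 'I_m} :=
  [set c | (s, c) \in a].

Definition qfrac (R : realType) (I J : finType) (N m : nat)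
  (tau : 'I_N -> I * J) (a : {set 'I_N * 'I_m}) (i : I) (j : J) (K : {set 'I_m}) : R :=
  #|[set s | (tau s == (i, j)) && (cache a s == K)]|%:R / #|[set s | tau s == (i, j)]|%:R.

(* popularity with the convention \bar\lambda_{m+1} = 0 (0-based indices) *)
Definition lbz (R : realType) (m : nat) (lb : nat -> R) (c : nat) : R :=
  if (c < m)%N then lb c else 0.

(* Main.v *)
Require Import Defs.
From HB Require Import structures.
From mathcomp Require Import all_boot all_order all_algebra.
From mathcomp Require Import all_classical all_reals all_analysis.
From mathcomp Require Import ring lra zify.
Import Order.TTheory GRing.Theory Num.Theory.
Import numFieldNormedType.Exports.
Local Open Scope ring_scope.
Set Implicit Arguments. Unset Strict Implicit. Unset Printing Implicit Defensive.

Definition gcnt (R : realType) (N m : nat) (st : gstate R N m) : nat :=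
  (\sum_(s : 'I_N) ((1 < #|cache (galloc st) s|)%N +
      ((cache (galloc st) s != finset.set0) && (gflow_s st s != 0%R)) : nat))%N.

Definition gzc (R : realType) (N m : nat) (st : gstate R N m) : nat :=
  (\sum_(c : 'I_m) ((gflow_c st c == 0%R) : nat))%N.

Definition ginv (R : realType) (N m : nat) (Us : 'I_N -> R) (ds : 'I_N -> nat)
  (lam : 'I_m -> R) (Um : R) (st : gstate R N m) : Prop :=
 [/\ (forall s, 0 <= gflow_s st s <= Us s) /\
     (forall c, 0 <= gflow_c st c <= lam c),
     (forall s, cache (galloc st) s = finset.set0 -> gdeg st s = ds s),
     (gcnt st <= gzc st)%N,
     (exists x : 'I_N -> 'I_m -> R,
        [/\ forall s c, 0 <= x s c,
            forall s c, (s, c) \notin galloc st -> x s c = 0,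
            forall s, \sum_c x s c = Us s - gflow_s st s &
            forall c, \sum_s x s c = lam c - gflow_c st c]) &
     (forall c, gflow_c st c < lam c -> forall c', gflow_c st c' <= gflow_c st c + Um)].

Lemma cache0 (N m : nat) s : cache (finset.set0 : {set 'I_N * 'I_m}) s = finset.set0.
Proof. by apply/setP => c; rewrite !inE. Qed.

Lemma cacheU1 (N m : nat) (A : {set 'I_N * 'I_m}) s0 c0 s :
  cache ((s0, c0) |: A) s = if s == s0 then c0 |: cache A s else cache A s.
Proof.
apply/setP => c; rewrite !inE xpair_eqE.
by case: (s =P s0) => [->|_]; rewrite !inE /=.
Qed.

Lemma ginv_init (R : realType) (N m : nat) (Us : 'I_N -> R) ds (lam : 'I_m -> R) Um :
  (forall s, 0 <= Us s) -> (forall c, 0 <= lam c) ->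
  ginv Us ds lam Um (GState Us ds lam finset.set0).
Proof.
move=> hU hl; split => //=.
- by split=> [s|c]; rewrite ?hU ?hl lexx.
- rewrite /gcnt /= big1 // => s _; by rewrite cache0 cards0 eqxx.
- exists (fun _ _ => 0); split => //.
  + by move=> s; rewrite big1 // subrr.
  + by move=> c; rewrite big1 // subrr.
- by move=> c; rewrite ltxx.
Qed.

Lemma pos3 (R : realType) (a b : R) (n : nat) :
  0 <= a -> 0 <= b -> 0 < a * n%:R * b -> [/\ 0 < a, (0 < n)%N & 0 < b].
Proof.
move=> ha hb h; split.
- rewrite lt_neqAle ha andbT; apply/eqP=> a0; by rewrite -a0 !mul0r ltxx in h.
- rewrite lt0n; apply/eqP=> n0; by rewrite n0 mulr0 mul0r ltxx in h.
- rewrite lt_neqAle hb andbT; apply/eqP=> b0; by rewrite -b0 !mulr0 ltxx in h.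
Qed.

Lemma card2_nonempty (m : nat) (c0 : 'I_m) (K : {set 'I_m}) :
  (1 < #|c0 |: K|)%N -> K != finset.set0.
Proof.
apply: contraTneq => ->; by rewrite finset.setU0 cards1.
Qed.

Lemma ginv_step (R : realType) (N m : nat) (Us : 'I_N -> R) ds (lam : 'I_m -> R) Um st st' :
  (forall s, Us s <= Um) -> ginv Us ds lam Um st -> genabled st -> gstep st st' ->
  ginv Us ds lam Um st'.
Proof.
move=> hUm [[hfs hfc] hdeg hcnt [x [x0 xA xs xc]] hwf] [s1 [c1 hpos]]
  [s0 [c0 [hd0 hms hmc hst]]].
rewrite /= in hst; subst st'.
have [hfs1 hd1 hfc1] := pos3 (proj1 (andP (hfs s1))) (proj1 (andP (hfc c1))) hpos.
have fs0 : 0 < gflow_s st s0 := lt_le_trans hfs1 (hms s1 hd1).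
have fc0 : 0 < gflow_c st c0 := lt_le_trans hfc1 (hmc c1).
set f := Num.min (gflow_s st s0) (gflow_c st c0).
have hf : (f = gflow_s st s0 /\ gflow_s st s0 <= gflow_c st c0) \/
          (f = gflow_c st c0 /\ gflow_c st c0 < gflow_s st s0).
  rewrite /f; case: (leP (gflow_s st s0) (gflow_c st c0)) => h.
  - by left.
  - by right.
have f0 : 0 < f by case: hf => -[-> _].
have fl1 : f <= gflow_s st s0 by case: hf => -[-> h] //; apply: ltW.
have fl2 : f <= gflow_c st c0 by case: hf => -[-> h] //.
have hUs0 := hUm s0.
have [hfs0a hfs0b] := andP (hfs s0).
split => /=.
- split => [s|c].
  + case: eqP => [->|_] //; apply/andP; split; lra.
  + case: eqP => [->|_] //; have /andP[? ?] := hfc c0; apply/andP; split; lra.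
- move=> s; rewrite cacheU1; case: eqP => [_ h|_ /hdeg] //.
  by have := setU11 c0 (cache (galloc st) s); rewrite h inE.
- move: hcnt; rewrite /gcnt /gzc /= (bigD1 s0) //= [X in _ -> (X <= _)%N](bigD1 s0) //=.
  rewrite (bigD1 c0) //= [X in _ -> (_ <= X)%N](bigD1 c0) //= eqxx cacheU1 eqxx.
  rewrite [in X in _ -> X](eq_bigr (fun s => ((1 < #|cache (galloc st) s|)%N +
      ((cache (galloc st) s != finset.set0) && (gflow_s st s != 0%R)) : nat))%N); last first.
    by move=> s /negbTE hs; rewrite cacheU1 hs.
  rewrite [in X in _ -> X](eq_bigr (fun c => (gflow_c st c == 0%R) : nat)); last first.
    by move=> c /negbTE hc; rewrite hc.
  rewrite (gt_eqF fc0) (gt_eqF fs0) /=.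
  have hK := @card2_nonempty m c0 (cache (galloc st) s0).
  move: (\sum_(i < N | _) _)%N (\sum_(i < m | _) _)%N => S Z.
  rewrite eqxx.
  case: hf => -[hfe _]; rewrite hfe subrr eqxx /= ?andbF.
  + move: (gflow_c st c0 - gflow_s st s0 == 0%R) => b5.
    move: hK; case: (1 < #|c0 |: _|)%N; case: (1 < #|cache _ s0|)%N;
      case: (cache _ s0 != _); case: b5 => //= hK'; first [ by have := hK' isT | clear -S Z; lia ].
  + move: (c0 |: _ != _ ) (gflow_s st s0 - gflow_c st c0 != 0%R) => b4 b5.
    move: hK; case: (1 < #|c0 |: _|)%N; case: (1 < #|cache _ s0|)%N;
      case: (cache _ s0 != _); case: b4; case: b5 => //= hK'; first [ by have := hK' isT | clear -S Z; lia ].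
- exists (fun s c => x s c + (if (s == s0) && (c == c0) then f else 0)); split.
  + move=> s c; case: ifP => _; rewrite ?addr0 //; apply: addr_ge0 => //; lra.
  + move=> s c; rewrite in_setU1 negb_or xpair_eqE => /andP[hne hnin].
    by rewrite xA // (negbTE hne) addr0.
  + move=> s; rewrite big_split /= xs; case: (s =P s0) => [->|_] /=.
    * rewrite (bigD1 c0) //= eqxx big1 => [|c /negbTE -> //]; lra.
    * rewrite big1 //; lra.
  + move=> c; rewrite big_split /= xc; case: (c =P c0) => [->|_] /=.
    * rewrite (bigD1 s0) //= eqxx big1 => [|s /negbTE -> //] /=; lra.
    * rewrite big1 => [|s _]; last by rewrite andbF.
      lra.
- move=> c; case: (c =P c0) => [->|hne] hlt c'.
  + have := hmc c'; case: (c' =P c0) => _; lra.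
  + have h := hwf c hlt c'; case: (c' =P c0) => _; lra.
Qed.

Lemma ginv_reach (R : realType) (N m : nat) (Us : 'I_N -> R) ds (lam : 'I_m -> R) Um st st' :
  (forall s, Us s <= Um) -> greach st st' -> ginv Us ds lam Um st -> ginv Us ds lam Um st'.
Proof.
move=> hUm; elim => // s1 s2 s3 hen hstep _ IH hi.
by apply: IH; apply: ginv_step hi hen hstep.
Qed.

Lemma gzc_le (R : realType) (N m : nat) (st : gstate R N m) : (gzc st <= m)%N.
Proof.
rewrite /gzc; apply: leq_trans (_ : (\sum_(c < m) 1 <= m)%N).
  by apply: leq_sum => c _; case: (_ == _).
by rewrite sum1_card card_ord.
Qed.

Lemma card_le1_set1 (m : nat) (K : {set 'I_m}) c :
  c \in K -> ~~ (1 < #|K|)%N -> K = [set c].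
Proof.
move=> hc hK; apply/eqP; rewrite eq_sym finset.eqEcard finset.sub1set hc cards1 /=.
by rewrite leqNgt.
Qed.

Lemma gfinal (R : realType) (N m : nat) (Us : 'I_N -> R) ds (lam : 'I_m -> R) Um fin :
  (forall s, 0 < Us s) -> (forall s, (1 <= ds s)%N) -> (forall s, Us s <= Um) -> 0 <= Um ->
  ginv Us ds lam Um fin -> ~ genabled fin ->
  [/\ (\sum_s ((1 < #|cache (galloc fin) s|)%N : nat) <= m)%N,
      (forall c, `| \sum_(s | cache (galloc fin) s == [set c]) Us s
                    - (lam c - gflow_c fin c)| <= m%:R * Um),
      (forall c, 0 <= gflow_c fin c <= lam c),
      (forall c, gflow_c fin c < lam c -> forall c', gflow_c fin c' <= gflow_c fin c + Um) &
      \sum_c lam c - \sum_s Us s <= \sum_c gflow_c fin c /\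
      ((exists c, 0 < gflow_c fin c) ->
        \sum_c gflow_c fin c <= \sum_c lam c - \sum_s Us s + m%:R * Um)].
Proof.
move=> hU hd hUm Um0 [[hfs hfc] hdeg hcnt [x [x0 xA xs xc]] hwf] hnen.
set a := galloc fin; set F := gflow_c fin; set fs := gflow_s fin.
set b1 := fun s => ((1 < #|cache a s|)%N : nat).
set b2 := fun s => ((cache a s != finset.set0) && (fs s != 0%R) : nat).
have hb : (\sum_s b1 s + \sum_s b2 s <= m)%N.
  rewrite -big_split /=; apply: leq_trans (gzc_le fin); exact: hcnt.
have hb1 : (\sum_s b1 s <= m)%N by apply: leq_trans hb; apply: leq_addr.
have hb2 : (\sum_s b2 s <= m)%N by apply: leq_trans hb; apply: leq_addl.
have cons : \sum_c (lam c - F c) = \sum_s (Us s - fs s).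
  rewrite -(eq_bigr _ (fun c _ => xc c)) exchange_big /=.
  by apply: eq_bigr => s _; rewrite xs.
split => //.
-
  move=> c.
  have hsz : forall s c', ((s, c') \in a) = (c' \in cache a s) by move=> s c'; rewrite inE.
  have hper : forall s, - ((b2 s)%:R * Um) <= x s c - (if cache a s == [set c] then Us s else 0)
                       <= (b1 s)%:R * Um.
    move=> s; have /andP[hfs0 hfs1] : 0 <= fs s <= Us s := hfs s; have hUs := hUm s.
    have hb10 : 0 <= (b1 s)%:R * Um by apply: mulr_ge0.
    have hb20 : 0 <= (b2 s)%:R * Um by apply: mulr_ge0.
    case: ifP => h1.
    + have hx : x s c = Us s - fs s.
        rewrite -xs (bigD1 c) //= big1 ?addr0 // => c' hc'; apply: xA.
        by rewrite hsz (eqP h1) inE (negbTE hc').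
      rewrite hx; apply/andP; split; last by lra.
      case: (fs s =P 0%R) => [->|hne]; first by lra.
      have -> : b2 s = 1%N.
        rewrite /b2 (eqP h1); apply/eqP; rewrite eqb1; apply/andP; split; last by apply/eqP.
        by apply/eqP => h; have := set11 c; rewrite h inE.
      lra.
    + case hc: (c \in cache a s).
      * have -> : b1 s = 1%N.
          rewrite /b1; apply/eqP; rewrite eqb1; apply: contraFT h1 => h.
          by rewrite (card_le1_set1 hc h).
        have hxs : x s c <= Us s - fs s.
          rewrite -xs (bigD1 c) //= lerDl; apply: sumr_ge0 => *; exact: x0.
        have := x0 s c; lra.
      * rewrite xA ?hsz ?hc //; lra.
  have hS : \sum_s (x s c - (if cache a s == [set c] then Us s else 0)) =
            (lam c - F c) - \sum_(s | cache a s == [set c]) Us s.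
    by rewrite sumrB xc [in RHS]big_mkcond.
  have hlo : - ((\sum_s b2 s)%:R * Um) <= \sum_s (x s c - (if cache a s == [set c] then Us s else 0)).
    rewrite natr_sum mulr_suml -sumrN; apply: ler_sum => s _; by case/andP: (hper s).
  have hhi : \sum_s (x s c - (if cache a s == [set c] then Us s else 0)) <= (\sum_s b1 s)%:R * Um.
    rewrite natr_sum mulr_suml; apply: ler_sum => s _; by case/andP: (hper s).
  have e1 : (\sum_s b1 s)%:R * Um <= m%:R * Um by apply: ler_wpM2r => //; rewrite ler_nat.
  have e2 : (\sum_s b2 s)%:R * Um <= m%:R * Um by apply: ler_wpM2r => //; rewrite ler_nat.
  rewrite hS in hlo hhi; rewrite ler_norml; apply/andP; split; lra.
- have hsum : \sum_c F c = \sum_c lam c - \sum_s Us s + \sum_s fs s.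
    have := cons; rewrite !sumrB; lra.
  split.
  + have : 0 <= \sum_s fs s by apply: sumr_ge0 => s _; case/andP: (hfs s).
    lra.
  + move=> [c1 hc1].
    have hper : forall s, fs s <= (b2 s)%:R * Um.
      move=> s; have /andP[hfs0 hfs1] : 0 <= fs s <= Us s := hfs s; have hUs := hUm s.
      case: (fs s =P 0%R) => [->|hne]; first by apply: mulr_ge0.
      have hpos : 0 < fs s by rewrite lt_neqAle eq_sym hfs0 andbT; apply/eqP.
      have hdg : gdeg fin s = 0%N.
        apply/eqP; rewrite -leqn0 leqNgt; apply/negP => hd0; apply: hnen.
        by exists s, c1; rewrite !mulr_gt0 // ltr0n.
      have -> : b2 s = 1%N.
        rewrite /b2; apply/eqP; rewrite eqb1; apply/andP; split; last by apply/eqP.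
        apply/eqP => h; have := hdeg s h; rewrite hdg => h'; have := hd s; rewrite -h'.
        by [].
      lra.
    have : \sum_s fs s <= (\sum_s b2 s)%:R * Um.
      rewrite natr_sum mulr_suml; exact: ler_sum.
    have e2 : (\sum_s b2 s)%:R * Um <= m%:R * Um by apply: ler_wpM2r => //; rewrite ler_nat.
    lra.
Qed.

Lemma lim_bound (R : realType) (u : nat -> R) (l t C : R) (N : nat -> nat) :
  (u @ \oo --> l)%classic -> 0 <= C ->
  (forall M, exists k0, forall k, (k0 <= k)%N -> (M <= N k)%N) ->
  (forall k, (0 < N k)%N -> `|u k - t| <= C / (N k)%:R) -> l = t.
Proof.
move=> hu C0 hN hb.
have ht : (u @ \oo --> t)%classic.
  apply/cvgrPdist_le => eps heps.
  have [k0 hk0] := hN (Num.bound (C / eps)).+1.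
  exists k0 => // k /= hk.
  have hNk := hk0 k hk.
  have hpos : (0 < N k)%N by apply: leq_trans hNk.
  have hNr : C / eps < (N k)%:R.
    apply: lt_le_trans (archi_boundP _) _; first by apply: divr_ge0 => //; apply: ltW. rewrite ler_nat; apply: leq_trans hNk; exact: leqnSn.
  rewrite distrC; apply: le_trans (hb k hpos) _.
  have Np : 0 < (N k)%:R :> R by rewrite ltr0n.
  rewrite ler_pdivrMr //; rewrite ltr_pdivrMr // in hNr; lra.
exact: cvg_unique ht.
Qed.

Lemma cvg_sum_seq (R : realType) (T : Type) (r : seq T) (F : T -> nat -> R) (l : T -> R) :
  (forall i, (F i @ \oo --> l i)%classic) ->
  ((fun k => \sum_(i <- r) F i k) @ \oo --> \sum_(i <- r) l i)%classic.
Proof.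
move=> h; elim: r => [|i r IH].
  rewrite big_nil; under eq_fun do rewrite big_nil; exact: cvg_cst.
rewrite big_cons; under eq_fun do rewrite big_cons.
exact: cvgD.
Qed.

Lemma exists_argmax (R : realType) (m : nat) (F : 'I_m -> R) (c0 : 'I_m) :
  exists c1, forall c, F c <= F c1.
Proof.
case: (@arg_maxP _ R 'I_m c0 xpredT F isT) => c1 _ h.
by exists c1 => c; exact: h.
Qed.

Lemma card_set_sum (T : finType) (P : pred T) :
  #|[set s | P s]| = (\sum_s (P s : nat))%N.
Proof.
rewrite -sum1_card big_mkcond /=; apply: eq_bigr => s _; rewrite inE.
by case: (P s).
Qed.

Lemma sum_type (R : realType) (I J : finType) (n : nat) (tau : 'I_n -> I * J)
  (P : pred 'I_n) (G : I * J -> R) :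
  \sum_(s | P s) G (tau s) =
  \sum_i \sum_j G (i, j) * #|[set s | (tau s == (i, j)) && P s]|%:R.
Proof.
rewrite (partition_big tau predT) //= pair_big /=.
apply: eq_bigr => -[i j] _ /=.
rewrite (eq_bigr (fun=> G (i, j))); last by move=> s /andP[_ /eqP ->].
rewrite sumr_const mulr_natr; congr (_ *+ _).
apply: eq_card => s; by rewrite inE andbC.

Qed.

Lemma waterfill (R : realType) (m : nat) (lam F : 'I_m -> R) (c0 : 'I_m) (Um Tlo Lx : R) :
  0 <= Um ->
  (forall c, lam c <= lam c0) ->
  (forall c, 0 <= F c <= lam c) ->
  (forall c, F c < lam c -> forall c', F c' <= F c + Um) ->
  Tlo <= \sum_c F c <= Tlo + m%:R * Um ->
  \sum_c Num.min (lam c) Lx = Tlo ->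
  Lx <= lam c0 ->
  forall c, `|F c - Num.min (lam c) Lx| <= (m%:R + m%:R + 1) * Um.
Proof.
move=> Um0 hl0 hF hwf /andP[hT1 hT2] hG hL0.
have [M [hc1 hMle]] : exists M, (forall c, F c <= M) /\ (forall c, F c < lam c -> M <= F c + Um).
  have [c1 hc1] := exists_argmax F c0.
  by exists (F c1); split => // c hc; apply: hwf.
have ha : forall c, Num.min (lam c) M - Um <= F c <= Num.min (lam c) M.
  move=> c; have /andP[h1 h2] := hF c; have h3 := hc1 c.
  case: (ltP (F c) (lam c)) => hlt.
  - have h4 := hMle c hlt.
    case: (leP (lam c) M) => h5; apply/andP; split; lra.
  - case: (leP (lam c) M) => h5; apply/andP; split; lra.
have hsum1 : \sum_c Num.min (lam c) M - m%:R * Um <= \sum_c F c.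
  have -> : m%:R * Um = \sum_(c < m) Um by rewrite sumr_const card_ord mulr_natl.
  rewrite -sumrB; apply: ler_sum => c _; by case/andP: (ha c).
have hsum2 : \sum_c F c <= \sum_c Num.min (lam c) M.
  apply: ler_sum => c _; by case/andP: (ha c).
have [nu [hnu hnul]] : exists nu, (forall c, Num.min (lam c) nu = Num.min (lam c) M) /\ nu <= lam c0.
  exists (Num.min M (lam c0)); split; last by case: (leP M (lam c0)) => h; lra.
  move=> c; have := hl0 c.
  case: (leP M (lam c0)) => h1 h2 //.
  case: (leP (lam c) (lam c0)) => h3; case: (leP (lam c) M) => h4 //; lra.
have hmono : forall x y, x <= y -> y <= lam c0 ->
    y - x <= \sum_c Num.min (lam c) y - \sum_c Num.min (lam c) x.
  move=> x y hxy hy; rewrite -sumrB (bigD1 c0) //=.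
  have -> : Num.min (lam c0) y - Num.min (lam c0) x = y - x.
    case: (leP (lam c0) y) => h1; case: (leP (lam c0) x) => h2; lra.
  rewrite lerDl; apply: sumr_ge0 => c _.
  case: (leP (lam c) y) => h1; case: (leP (lam c) x) => h2; lra.
have hGnu : \sum_c Num.min (lam c) nu = \sum_c Num.min (lam c) M.
  by apply: eq_bigr => c _; rewrite hnu.
have hD : - (m%:R + m%:R) * Um <= nu - Lx <= (m%:R + m%:R) * Um.
  case: (leP nu Lx) => h.
  - have := hmono nu Lx h hL0; rewrite hG hGnu => h'.
    apply/andP; split; nra.
  - have := hmono Lx nu (ltW h) hnul; rewrite hG hGnu => h'.
    apply/andP; split; nra.
move=> c; rewrite ler_norml.
have /andP[hc1' hc2'] := ha c; rewrite -hnu in hc1' hc2'.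
have /andP[hD1 hD2] := hD.
case: (leP (lam c) nu) => h1 in hc1' hc2' *; case: (leP (lam c) Lx) => h2;
  apply/andP; split; nra.
Qed.

Lemma sumU (R : realType) (I J : finType) (U : I -> R) (alpha : I -> J -> R) (n : nat)
  (tau : 'I_n -> I * J) :
  (forall i j, #|[set s | tau s == (i, j)]|%:R = n%:R * alpha i j) ->
  \sum_s U (tau s).1 = n%:R * \sum_i \sum_j alpha i j * U i.
Proof.
move=> ht.
rewrite (sum_type tau xpredT (fun p => U p.1)) /= mulr_sumr.
apply: eq_bigr => i _; rewrite mulr_sumr; apply: eq_bigr => j _.
rewrite (_ : [set s | (tau s == (i, j)) && xpredT s] = [set s | tau s == (i, j)]).
  by rewrite ht; ring.
by apply/setP => s; rewrite !inE andbT.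
Qed.

Lemma theta_k (R : realType) (I J : finType) (U : I -> R) (alpha : I -> J -> R) (n m : nat)
  (tau : 'I_n -> I * J) (A : {set 'I_n * 'I_m}) (K : {set 'I_m}) :
  (0 < n)%N ->
  (forall i j, #|[set s | tau s == (i, j)]|%:R = n%:R * alpha i j) ->
  \sum_i \sum_j alpha i j * U i * qfrac R tau A i j K =
  (\sum_(s | cache A s == K) U (tau s).1) / n%:R.
Proof.
move=> hn ht.
rewrite (sum_type tau (fun s => cache A s == K) (fun p => U p.1)) /= mulr_suml.
apply: eq_bigr => i _; rewrite mulr_suml; apply: eq_bigr => j _.
have hn' : (n%:R : R) != 0 by rewrite pnatr_eq0 -lt0n.
rewrite /qfrac ht.
case: (alpha i j =P 0) => [a0|an0].
- have hc : #|[set s | (tau s == (i, j)) && (cache A s == K)]| = 0%N.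
    apply/eqP; rewrite -leqn0 -(ler_nat R).
    have <- : (#|[set s | tau s == (i, j)]|%:R : R) = 0%:R by rewrite ht a0 mulr0.
    rewrite ler_nat; apply: subset_leq_card; apply/fintype.subsetP => s; rewrite !inE.
    by case/andP.
  by rewrite hc a0 !mul0r mulr0 mul0r.
- by field; apply/andP; split => //; apply/eqP.
Qed.

Lemma mono_lb (R : realType) (m : nat) (lb : nat -> R) :
  (forall c, (c.+1 < m)%N -> lb c.+1 < lb c) ->
  forall c d, (c <= d)%N -> (d < m)%N -> lb d <= lb c.
Proof.
move=> hdec c; elim=> [|d IH] hcd hdm.
  by move: hcd; rewrite leqn0 => /eqP ->.
move: hcd; rewrite leq_eqVlt => /orP[/eqP -> //|hcd].
apply: le_trans (ltW (hdec d hdm)) _; apply: IH => //.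
by apply: ltn_trans hdm.
Qed.

Unset Implicit Arguments.

Theorem lemma1 (R : realType) (I J : finType) (U : I -> R) (d : J -> nat)
  (alpha : I -> J -> R) (m : nat) (lb : nat -> R)
  (N : nat -> nat) (tau : forall k, 'I_(N k) -> I * J)
  (a : forall k, {set 'I_(N k) * 'I_m})
  (q : I -> J -> {set 'I_m} -> R) :
  (forall i, 0 < U i) ->
  (forall j, (1 <= d j)%N) ->
  (forall i j, 0 <= alpha i j) ->
  \sum_(i : I) \sum_(j : J) alpha i j = 1 ->
  (forall c, (c < m)%N -> 0 < lb c) ->
  (* a sequence of instances whose sizes tend to infinity *)
  (forall M, exists k0, forall k, (k0 <= k)%N -> (M <= N k)%N) ->
  (* exactly n * alpha_ij servers of each type (i,j) *)
  (forall k i j, #|[set s | tau k s == (i, j)]|%:R = (N k)%:R * alpha i j) ->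
  (* a k is an output of greedy on the k-th instance *)
  (forall k, greedy_output (fun s => U (tau k s).1) (fun s => d (tau k s).2)
                           (fun c : 'I_m => (N k)%:R * lb c) (a k)) ->
  (* q is the limit of the fractions q^(n) *)
  (forall i j K, ((fun k => qfrac R (tau k) (a k) i j K) @ \oo --> q i j K)%classic) ->
  let lbar := \sum_(0 <= c < m) lb c in
  let rho := lbar / (\sum_(i : I) \sum_(j : J) alpha i j * U i) in
  let theta := fun c : 'I_m =>
    \sum_(i : I) \sum_(j : J) alpha i j * U i * q i j [set c] in
  [/\ (forall i j (K : {set 'I_m}), (2 <= #|K|)%N -> q i j K = 0),
      (rho <= 1 -> forall c : 'I_m, theta c = lb c) &
      (1 < rho ->
       (forall c, (c.+1 < m)%N -> lb c.+1 < lb c) ->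
       forall cs : 'I_m,
         \sum_(0 <= c < cs) lb c - (cs%:R) * lb cs < lbar / rho ->
         lbar / rho <= \sum_(0 <= c < cs.+1) lb c - (cs.+1%:R) * lbz m lb cs.+1 ->
         forall c : 'I_m,
           theta c = if (c <= cs)%N
                     then lb c - (cs.+1%:R)^-1 * (\sum_(0 <= c' < cs.+1) lb c' - lbar / rho)
                     else 0)].
Proof.
move=> hU hd ha hsa hlb hN htype hgr hq lbar rho theta.
have [B [hBdef B0]] : exists B, B = \sum_(i : I) \sum_(j : J) alpha i j * U i /\ 0 < B.
  exists (\sum_(i : I) \sum_(j : J) alpha i j * U i); split => //.
  have hge : forall i, 0 <= \sum_j alpha i j * U i.
    by move=> i; apply: sumr_ge0 => j _; apply: mulr_ge0 => //; apply: ltW.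
  rewrite lt_def sumr_ge0 // andbT; apply/eqP => hB.
  have h0 := psumr_eq0P (fun i _ => hge i) hB.
  move: hsa; rewrite big1 => [|i _]; first by move/eqP; rewrite eq_sym oner_eq0.
  apply: big1 => j _.
  have h1 : alpha i j * U i = 0.
    apply: (psumr_eq0P _ (h0 i isT)) => // j' _; apply: mulr_ge0 => //; exact: ltW.
  by move/eqP: h1; rewrite mulf_eq0 (gt_eqF (hU i)) orbF => /eqP.
have rhoE : rho = lbar / B by rewrite hBdef.
have [Um [hUm Um0]] : exists Um, (forall i, U i <= Um) /\ 0 <= Um.
  exists (\sum_i U i); split; last by apply: sumr_ge0 => i _; apply: ltW.
  move=> i; rewrite (bigD1 i) //= lerDl; apply: sumr_ge0 => i' _; exact: ltW (hU i').
have hlbar : forall k, \sum_(c : 'I_m) (N k)%:R * lb c = (N k)%:R * lbar.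
  by move=> k; rewrite -mulr_sumr /lbar big_mkord.
have inst : forall k, exists F : 'I_m -> R,
  [/\ (\sum_s ((1 < #|cache (a k) s|)%N : nat) <= m)%N,
      (forall c, `| \sum_(s | cache (a k) s == [set c]) U (tau k s).1
                    - ((N k)%:R * lb c - F c)| <= m%:R * Um),
      (forall c, 0 <= F c <= (N k)%:R * lb c),
      (forall c, F c < (N k)%:R * lb c -> forall c', F c' <= F c + Um) &
      (N k)%:R * lbar - (N k)%:R * B <= \sum_c F c /\
      ((exists c, 0 < F c) ->
        \sum_c F c <= (N k)%:R * lbar - (N k)%:R * B + m%:R * Um)].
  move=> k; have [fin [hr hne hfa]] := hgr k.
  have hi0 := @ginv_init R (N k) m (fun s => U (tau k s).1) (fun s => d (tau k s).2)
     (fun c => (N k)%:R * lb c) Um (fun s => ltW (hU _))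
     (fun c => mulr_ge0 (ler0n _ _) (ltW (hlb c (ltn_ord c)))).
  have hi := ginv_reach (fun s => hUm _) hr hi0.
  have := gfinal (fun s => hU _) (fun s => hd _) (fun s => hUm _) Um0 hi hne.
  rewrite hfa hlbar (@sumU R I J U alpha (N k) (tau k) (htype k)) -hBdef.
  by move=> H; exists (gflow_c fin).
have hu : forall c : 'I_m, ((fun k => \sum_i \sum_j alpha i j * U i *
      qfrac R (tau k) (a k) i j [set c]) @ \oo --> theta c)%classic.
  move=> c; rewrite /theta; apply: cvg_sum_seq => i; apply: cvg_sum_seq => j.
  apply: cvgMl_tmp; exact: hq.
have hthk : forall c k, (0 < N k)%N ->
    \sum_i \sum_j alpha i j * U i * qfrac R (tau k) (a k) i j [set c] =
    (\sum_(s | cache (a k) s == [set c]) U (tau k s).1) / (N k)%:R.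
  by move=> c k hk; apply: theta_k hk (htype k).
split.
-
  move=> i j K hK.
  apply: (@lim_bound R _ _ 0 (m%:R / alpha i j) N (hq i j K)) => //.
    by apply: divr_ge0 => //; apply: ler0n.
  move=> k hk; rewrite subr0.
  have [F [hQ1 _ _ _ _]] := inst k.
  have hc : (#|[set s | (tau k s == (i, j)) && (cache (a k) s == K)]| <= m)%N.
    apply: leq_trans hQ1; rewrite -card_set_sum; apply: subset_leq_card.
    apply/fintype.subsetP => s; rewrite !inE => /andP[_ /eqP ->]; exact: hK.
  rewrite /qfrac htype.
  have hn' : ((N k)%:R : R) != 0 by rewrite pnatr_eq0 -lt0n.
  case: (alpha i j =P 0) => [a0|an0].
    by rewrite a0 !mulr0 invr0 !mulr0 normr0.
  have hap : 0 < alpha i j by rewrite lt_def ha andbT; apply/eqP.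
  rewrite ger0_norm; last by apply: divr_ge0; [apply: ler0n | apply: mulr_ge0; [apply: ler0n|]].
  have -> : m%:R / alpha i j / (N k)%:R = m%:R / ((N k)%:R * alpha i j).
    by field; apply/andP; split => //; apply/eqP.
  apply: ler_wpM2r; first by rewrite invr_ge0; apply: mulr_ge0 => //; apply: ler0n.
  by rewrite ler_nat.
-
  move=> hrho c.
  have hlB : lbar <= B by move: hrho; rewrite rhoE ler_pdivrMr // mul1r.
  apply: (@lim_bound R _ _ _ ((m%:R + m%:R) * Um) N (hu c)) => //.
    by apply: mulr_ge0 => //; apply: addr_ge0; apply: ler0n.
  move=> k hk; rewrite hthk //.
  have [F [_ hQ2 hQ3 _ [hQ4a hQ4b]]] := inst k.
  move: (\sum_(s | cache (a k) s == [set c]) U (tau k s).1) (hQ2 c) => S {}hQ2.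
  have n0 : 0 < (N k)%:R :> R by rewrite ltr0n.
  have mU0 : 0 <= m%:R * Um by apply: mulr_ge0 => //; apply: ler0n.
  have hFc : F c <= m%:R * Um.
    case: (pselect (exists c, 0 < F c)) => [hex|hnex].
    + have h1 := hQ4b hex.
      have h2 : F c <= \sum_c F c.
        rewrite (bigD1 c) //= lerDl; apply: sumr_ge0 => c' _; by case/andP: (hQ3 c').
      have h3 : (N k)%:R * lbar <= (N k)%:R * B by apply: ler_wpM2l => //; apply: ltW.
      lra.
    + have : ~~ (0 < F c) by apply/negP => h; apply: hnex; exists c.
      rewrite -leNgt => h; lra.
  have /andP[hF0 _] := hQ3 c.
  rewrite ler_norml in hQ2; case/andP: hQ2 => h1 h2.
  have -> : S / (N k)%:R - lb c = (S - (N k)%:R * lb c) / (N k)%:R.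
    by field; rewrite gt_eqF.
  rewrite normrM normfV (ger0_norm (ltW n0)).
  apply: ler_wpM2r; first by rewrite invr_ge0; apply: ltW.
  rewrite ler_norml; apply/andP; split; lra.
-
  move=> hrho hdec cs hlo hhi c.
  have hBl : B < lbar by move: hrho; rewrite rhoE ltr_pdivlMr // mul1r.
  have lb0 : 0 < lbar by lra.
  have hrB : lbar / rho = B.
    by rewrite rhoE; field; rewrite (gt_eqF lb0) (gt_eqF B0).
  rewrite hrB in hlo hhi *.
  have hmono := mono_lb hdec.
  have hm0 : (0 < m)%N by apply: leq_ltn_trans (leq0n cs) (ltn_ord cs).
  set L := (cs.+1%:R)^-1 * (\sum_(0 <= c' < cs.+1) lb c' - B).
  have hcs1 : (cs.+1%:R : R) = cs%:R + 1 by rewrite -addn1 natrD.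
  have hsplit : \sum_(0 <= c' < cs.+1) lb c' = \sum_(0 <= c' < cs) lb c' + lb cs.
    by rewrite big_nat_recr.
  have hLe : L * cs.+1%:R = \sum_(0 <= c' < cs.+1) lb c' - B.
    by rewrite /L; field; rewrite addrC natr1 pnatr_eq0.
  move: hLe; rewrite hsplit hcs1 in hhi * => hLe.
  have hcs0 : 0 <= (cs%:R : R) by apply: ler0n.
  have hLlt : L < lb cs by nra.
  have hLge : lbz m lb cs.+1 <= L by nra.
  have hmin : forall (c' : 'I_m) (n : R), 0 < n ->
      Num.min (n * lb c') (n * L) = n * (if (c' <= cs)%N then L else lb c').
    move=> c' n hn; case: ifP => h.
    - have h1 : lb cs <= lb c' := hmono c' cs h (ltn_ord cs).
      by case: (leP (n * lb c') (n * L)) => h' //; nra.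
    - have h0 : (cs.+1 <= c')%N by rewrite ltnNge h.
      have h1 : lb c' <= lb cs.+1 := hmono cs.+1 c' h0 (ltn_ord c').
      have h2 : lbz m lb cs.+1 = lb cs.+1.
        by rewrite /lbz ifT //; apply: leq_ltn_trans h0 (ltn_ord c').
      by case: (leP (n * lb c') (n * L)) => h' //; nra.
  have hG : forall n : R, 0 < n ->
      \sum_(c' : 'I_m) Num.min (n * lb c') (n * L) = n * lbar - n * B.
    move=> n hn; rewrite (eq_bigr _ (fun c' _ => hmin c' n hn)) -mulr_sumr -mulrBr.
    congr (_ * _).
    rewrite -(big_mkord xpredT (fun c' => if (c' <= cs)%N then L else lb c')).
    rewrite /lbar (@big_cat_nat _ _ _ cs.+1 0 m) ?ltn_ord //.
    rewrite [in RHS](@big_cat_nat _ _ _ cs.+1 0 m) ?ltn_ord //=.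
    rewrite (@eq_big_nat _ _ _ 0 cs.+1 (fun i => if (i <= cs)%N then L else lb i) (fun=> L));
      last by move=> i /andP[_ hi]; rewrite -ltnS hi.
    rewrite (@eq_big_nat _ _ _ cs.+1 m (fun i => if (i <= cs)%N then L else lb i) lb);
      last by move=> i /andP[hi _]; rewrite leqNgt hi.
    rewrite sumr_const_nat subn0 -mulr_natr.
    rewrite hcs1 hsplit; lra.
  have hC0 : 0 <= (m%:R + (m%:R + m%:R + 1)) * Um.
    by apply: mulr_ge0 => //; rewrite ?addr_ge0 ?ler0n.
  apply: (@lim_bound R _ _ _ ((m%:R + (m%:R + m%:R + 1)) * Um) N (hu c)) => //.
  move=> k hk; rewrite hthk //.
  have [F [_ hQ2 hQ3 hQ5 [hQ4a hQ4b]]] := inst k.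
  have n0 : 0 < (N k)%:R :> R by rewrite ltr0n.
  have hex : exists c, 0 < F c.
    case: (pselect (exists c, 0 < F c)) => // hnex; exfalso.
    have : \sum_c F c <= \sum_(c : 'I_m) (0:R).
      apply: ler_sum => c' _; rewrite leNgt; apply/negP => h; apply: hnex; by exists c'.
    rewrite big1_eq => h.
    have : 0 < (N k)%:R * lbar - (N k)%:R * B by rewrite -mulrBr; apply: mulr_gt0 => //; lra.
    lra.
  have hlb00 : lb cs <= lb 0 := hmono 0%N cs (leq0n _) (ltn_ord cs).
  have hw := @waterfill R m (fun c' => (N k)%:R * lb c') F (Ordinal hm0) Um
    ((N k)%:R * lbar - (N k)%:R * B) ((N k)%:R * L) Um0 _ hQ3 hQ5 _ (hG _ n0) _ c.
  have hw' : `|F c - (N k)%:R * (if (c <= cs)%N then L else lb c)| <= (m%:R + m%:R + 1) * Um.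
    rewrite -hmin //; apply: hw.
    - move=> c'; apply: ler_wpM2l; [exact: ltW | exact: hmono (leq0n _) (ltn_ord c')].
    - apply/andP; split; [exact: hQ4a | exact: hQ4b hex].
    - apply: ler_wpM2l; [exact: ltW|]; rewrite /=; lra.
  have -> : (if (c <= cs)%N then lb c - L else 0) = lb c - (if (c <= cs)%N then L else lb c).
    by case: ifP => _ //; rewrite subrr.
  move: (if (c <= cs)%N then L else lb c) hw' => X hw'.
  move: (\sum_(s | cache (a k) s == [set c]) U (tau k s).1) (hQ2 c) => S {}hQ2.
  rewrite ler_norml in hQ2. rewrite ler_norml in hw'.
  have /andP[h1 h2] := hQ2. have /andP[h3 h4] := hw'.
  have -> : S / (N k)%:R - (lb c - X) =
      ((S - ((N k)%:R * lb c - F c)) + ((N k)%:R * X - F c)) / (N k)%:R.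
    by field; rewrite gt_eqF.
  rewrite normrM normfV (ger0_norm (ltW n0)).
  apply: ler_wpM2r; first by rewrite invr_ge0; apply: ltW.
  rewrite ler_norml; apply/andP; split; lra.
Qed.
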